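(* The map $\eta:\mathbf{T}_b\to\mathbf{F}$ is a bijection, and for all $t_1,t_2\in\mathbf{T}_b$: $t_1\leq t_2$ in the Tamari order if and only if $\eta(t_1)\leq\eta(t_2)$ in $\mathbf{F}$. In other words, $\eta$ is a poset isomorphism.
   Context: $\mathbf{T}_b$ is the set of planar binary trees, defined recursively: the single leaf $|$ is a planar binary tree, and if $t_1,t_2$ are planar binary trees then so is $t_1\vee t_2$ (grafting $t_1,t_2$ as left and right subtrees on a new root). The Tamari order $\leq$ on $\mathbf{T}_b$ is the reflexive-transitive closure of the relation $t\to t'$, where $t'$ is obtained from $t$ by replacing one subtree of the form $(a\vee b)\vee c$ by $a\vee(b\vee c)$. Planar rooted trees have their children linearly ordered left to right; $\mathbf{F}$ is the set of planar forests (finite, possibly empty, sequences $t_1\cdots t_n$ of planar rooted trees; $1$ = empty forest; product = concatenation). $B^+(F)$ is the tree obtained by grafting the trees of $F$ (in order) on a new common root. $\eta$ is defined recursively by $\eta(|)=1$, $\eta(t_1\vee t_2)=B^+(\eta(t_1))\,\eta(t_2)$. Order on $\mathbf{F}$: on vertices, $s\geq_{high}s'$ iff $s'=s$ or $s'$ is an ancestor of $s$; for $\geq_{high}$-incomparable $s,s'$, $s\geq_{left}s'$ iff $s\in t_i,s'\in t_j$ with $i<j$, or both lie in $t_i$ and $s\geq_{left}s'$ in the forest obtained from $t_i$ by deleting its root (recursively). An admissible transformation of a forest: choose a vertex $s$ which is the leftmost child of its parent $u$; if $u$ is not a root, with parent $r$, move the subtree rooted at $s$ to become a child of $r$ immediately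 to the left of $u$; if $u$ is a root, move the subtree rooted at $s$ to become a new tree immediately to the left of the tree of $u$; everything else unchanged. $F\leq G$ iff $G$ is obtained from $F$ by a finite (possibly empty) sequence of admissible transformations. *)

(* Defs.v *)
From Stdlib Require Import List Relations.
From Corelib Require Import ssreflect ssrfun.
Import ListNotations.

Inductive btree : Type :=
| Leaf : btree
| Node : btree -> btree -> btree.   (* Node t1 t2 = t1 \/ t2 *)

Inductive tamari_step : btree -> btree -> Prop :=
| ts_root a b c : tamari_step (Node (Node a b) c) (Node a (Node b c))
| ts_left l l' r : tamari_step l l' -> tamari_step (Node l r) (Node l' r)
| ts_right l r r' : tamari_step r r' -> tamari_step (Node l r) (Node l r').

Definition tamari_le : btree -> btree -> Prop := clos_refl_trans btree tamari_step.

(* Planar rooted trees (children ordered left to right) and planar forests. *)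
Inductive ptree : Type :=
| PNode : list ptree -> ptree.   (* PNode F = B^+(F) *)

Definition forest := list ptree.

(* Admissible transformations.  fs_root: s is the leftmost child of a root u;
   s becomes a new tree immediately left of u's tree.  fs_deep: the
   transformation happens inside the children-forest of some vertex r of the
   forest; in particular, when in that children-forest the root case is
   applied, s (leftmost child of u, u child of r) becomes a child of r
   immediately to the left of u. *)
Inductive forest_step : forest -> forest -> Prop :=
| fs_root (pre : forest) (s : ptree) (cs post : forest) :
    forest_step (pre ++ PNode (s :: cs) :: post) (pre ++ s :: PNode cs :: post)
| fs_deep (pre f f' post : forest) :
    forest_step f f' ->
    forest_step (pre ++ PNode f :: post) (pre ++ PNode f' :: post).

Definition forest_le : forest -> forest -> Prop := clos_refl_trans forest forest_step.

Fixpoint eta (t : btree) : forest :=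
  match t with
  | Leaf => []
  | Node t1 t2 => PNode (eta t1) :: eta t2
  end.

(* Main.v *)
Require Import Defs.
From Stdlib Require Import List Relations.
From Corelib Require Import ssreflect ssrfun.
Import ListNotations.

Fixpoint pinv (p : ptree) : btree :=
  match p with
  | PNode g =>
      (fix lf (l : list ptree) : btree :=
         match l with [] => Leaf | q :: r => Node (pinv q) (lf r) end) g
  end.

Definition finv (f : forest) : btree := pinv (PNode f).

Lemma finvK : cancel eta finv.
Proof. elim => //= a IHa b IHb. change (Node (finv (eta a)) (finv (eta b)) = Node a b). by rewrite IHa IHb. Qed.

Lemma etaK_p : forall p, eta (pinv p) = match p with PNode g => g end.
Proof.
  fix IH 1. case=> g. revert g. fix IH2 1. case => [|q r] //=.
  change (PNode (eta (pinv q)) :: eta (pinv (PNode r)) = q :: r).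
  rewrite IH2 IH. by case: q.
Qed.

Lemma etaK : cancel finv eta.
Proof. move=> f. exact: (etaK_p (PNode f)). Qed.

Lemma step_cons x f f' : forest_step f f' -> forest_step (x :: f) (x :: f').
Proof.
  case => [pre s cs post|pre g g' post H].
  - exact: (fs_root (x :: pre)).
  - exact: (fs_deep (x :: pre) _ _ _ H).
Qed.

Lemma fwd t t' : tamari_step t t' -> forest_step (eta t) (eta t').
Proof.
  elim => /= [a b c|l l' r _ IH|l r r' _ IH].
  - exact: (fs_root [] (PNode (eta a)) (eta b) (eta c)).
  - exact: (fs_deep [] _ _ (eta r) IH).
  - exact: step_cons.
Qed.

Lemma bwd F G : forest_step F G ->
  forall t, F = eta t -> exists t', G = eta t' /\ tamari_step t t'.
Proof.
  elim => [pre s cs post|pre f f' post _ IH].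
  - elim: pre => [|p pre IHp] t /=.
    + case: t => //= t1 t2 [] E1 E2.
      case: t1 E1 => //= a b [] Ea Eb.
      exists (Node a (Node b t2)); subst; split => //; constructor.
    + case: t => //= t1 t2 [] E1 E2.
      case: (IHp t2 E2) => t2' [E3 H].
      exists (Node t1 t2'); split; last by constructor. rewrite /= -E3. by subst.
  - elim: pre => [|p pre IHp] t /=.
    + case: t => //= t1 t2 [] E1 E2.
      case: (IH t1 E1) => t1' [E3 H].
      exists (Node t1' t2); split; last by constructor. rewrite /= -E3. by subst.
    + case: t => //= t1 t2 [] E1 E2.
      case: (IHp t2 E2) => t2' [E3 H].
      exists (Node t1 t2'); split; last by constructor. rewrite /= -E3. by subst.
Qed.

Lemma bwd_chain x y : clos_refl_trans_1n forest forest_step x y ->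
  forall t1 t2, x = eta t1 -> y = eta t2 -> tamari_le t1 t2.
Proof.
  elim => [z|z w v Hzw _ IH] t1 t2 E1 E2.
  - have -> : t1 = t2 by rewrite -(finvK t1) -E1 E2 finvK.
    exact: rt_refl.
  - case: (bwd _ _ Hzw _ E1) => t' [Ey Hs].
    exact: rt_trans (rt_step _ _ _ _ Hs) (IH t' t2 Ey E2).
Qed.

Theorem theorem31 :
  bijective eta /\
  (forall t1 t2 : btree, tamari_le t1 t2 <-> forest_le (eta t1) (eta t2)).
Proof.
  split; first exact: (Bijective finvK etaK).
  move=> t1 t2; split.
  - elim => [x y H|x|x y z _ IH1 _ IH2].
    + apply: rt_step; exact: fwd.
    + exact: rt_refl.
    + exact: rt_trans IH1 IH2.
  - move=> H0; apply clos_rt_rt1n in H0.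
    exact: (bwd_chain _ _ H0 _ _ (eq_refl _) (eq_refl _)).
Qed.
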